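(* Let $k\ge 1$ be an integer, $T=6k+1$, and $w=s_1\cdots s_T\in\Omega_T$. For any distinct $i,j,t\in\{1,2,3\}$, $2x_{ij}(w)+x_{it}(w)+x_{tj}(w)\ge x_{ji}(w)+2k-1$. If equality holds, then $s_T=i$.
   Context: $\Omega_T$ is the set of words $s_1\cdots s_T$ over $\{1,2,3\}$ with $s_l\ne s_{l+1}$ for all $l$; for $i\ne j$, $x_{ij}(w)$ is the number of $l\in\{1,\dots,T-1\}$ with $s_ls_{l+1}=ij$. *)

(* Defs.v *)
From mathcomp Require Import all_boot all_order.
Set Implicit Arguments. Unset Strict Implicit. Unset Printing Implicit Defensive.

(* Letters {1,2,3} are represented by 'I_3 = {0,1,2} (letter a+1 <-> a). *)
(* A word s_1 ... s_T is a T.-tuple; s_{l+1} is tnth/nth at index l (0-based). *)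

Definition letter (T : nat) (w : T.-tuple 'I_3) (l : nat) : 'I_3 :=
  nth ord0 w l.

Definition inOmega (T : nat) (w : T.-tuple 'I_3) : bool :=
  [forall l : 'I_T, (l.+1 < T) ==> (letter w l != letter w l.+1)].

(* x_ij(w) = #{ l in {1..T-1} : s_l s_{l+1} = ij } ; 0-based l in [0, T-1). *)
Definition xcount (T : nat) (w : T.-tuple 'I_3) (i j : 'I_3) : nat :=
  count (fun l => (letter w l == i) && (letter w l.+1 == j)) (iota 0 T.-1).

(* Main.v *)
Require Import Defs.
From mathcomp Require Import all_boot all_order.
From mathcomp Require Import zify.

Definition C (f : nat -> 'I_3) n (x y : 'I_3) :=
  count (fun l => (f l == x) && (f l.+1 == y)) (iota 0 n).

Lemma C_S f n x y : C f n.+1 x y = C f n x y + ((f n == x) && (f n.+1 == y)).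
Proof. by rewrite /C -[n.+1]addn1 iotaD count_cat /= add0n addn0 addn1. Qed.

Lemma three (i j t x : 'I_3) : i != j -> i != t -> j != t ->
  x = i \/ x = j \/ x = t.
Proof.
move: i j t x; do 4 (case=> [[|[|[|?]]] ?] //); intros; 
  try (by left; apply/val_inj); try (by right; left; apply/val_inj);
  try (by right; right; apply/val_inj).
Qed.

Lemma flow (f : nat -> 'I_3) (i j t : 'I_3) n :
  i != j -> i != t -> j != t ->
  (forall l, l < n -> f l != f l.+1) ->
  [/\ C f n i j + C f n i t + (f n == i) = C f n j i + C f n t i + (f 0 == i),
     C f n j i + C f n j t + (f n == j) = C f n i j + C f n t j + (f 0 == j)
   & C f n i j + C f n j i + C f n i t + C f n t i + C f n j t + C f n t j = n].
Proof.
move=> hij hit hjt; elim: n => [|n IH] H.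
  by rewrite /C /=; split.
have [IH1 IH2 IH3] := IH (fun l hl => H l (ltnW hl)).
have hn := H n (ltnSn n).
rewrite !C_S.
have hji : j != i by rewrite eq_sym.
have hti : t != i by rewrite eq_sym.
have htj : t != j by rewrite eq_sym.
move: (f 0 == i) (f 0 == j) IH1 IH2 IH3 => b1 b2 IH1 IH2 IH3.
move: (f n) (f n.+1) IH1 IH2 hn => u v IH1 IH2 hn.
case: (three i j t u hij hit hjt) => [E|[E|E]]; rewrite E in IH1 IH2 hn *;
case: (three i j t v hij hit hjt) => [E'|[E'|E']]; rewrite E' in hn *;
  rewrite ?eqxx in hn; move: hn IH1 IH2;
  rewrite ?eqxx ?(negPf hij) ?(negPf hit) ?(negPf hjt)
   ?(negPf hji) ?(negPf hti) ?(negPf htj) //= => _ IH1 IH2; split; lia.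
Qed.

Theorem lemma7 (k : nat) (w : (6 * k + 1).-tuple 'I_3) (i j t : 'I_3) :
  1 <= k -> inOmega w -> i != j -> i != t -> j != t ->
  xcount w j i + 2 * k - 1 <= 2 * xcount w i j + xcount w i t + xcount w t j /\
  (2 * xcount w i j + xcount w i t + xcount w t j = xcount w j i + 2 * k - 1 ->
   letter w (6 * k) = i).
Proof.
move=> hk hO hij hit hjt.
have X x y : xcount w x y = C (letter w) (6 * k) x y by rewrite /xcount /C; congr count; rewrite addn1.
rewrite !X.
have H : forall l, l < 6 * k -> letter w l != letter w l.+1.
  move=> l hl; have hl' : l < 6 * k + 1 by lia.
  by move/forallP: hO => /(_ (Ordinal hl')) /implyP; apply; rewrite /=; lia.
have [h1 h2 h3] := flow (letter w) i j t (6 * k) hij hit hjt H.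
move: h1 h2 h3.
case E: (letter w (6 * k) == i); [move/eqP: E => E|];
case: (letter w (6 * k) == j); case: (letter w 0 == i); case: (letter w 0 == j);
 move=> /= h1 h2 h3; (split; [lia| try (by move=> _); lia]).
Qed.
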